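(* Let $I\subseteq\mathbb{R}$ be an interval and $\mathscr{M}$ a mean on $I$. Then $\mathscr{M}$ is of type $\mathcal{T}_1^+$ if and only if $\mathscr{M}$ is a quasi-arithmetic mean on $I$, i.e. there is a continuous strictly monotone $f\colon I\to\mathbb{R}$ with $\mathscr{M}(x_1,\dots,x_n)=f^{-1}\big(\frac{f(x_1)+\cdots+f(x_n)}{n}\big)$ for all $n\in\mathbb{N}$ and $x_1,\dots,x_n\in I$.
   Context: A mean on an interval $I$ is a function $\mathscr{M}\colon\bigcup_{n=1}^\infty I^n\to I$ with $\min(a)\le\mathscr{M}(a)\le\max(a)$ for every $a$. For a commutative semigroup $(Y,+)$ and $F\colon I\to Y$, let $\omega F(I):=\bigcup_{n=1}^\infty\{F(x_1)+\cdots+F(x_n): x_i\in I\}$, and for $G\colon\omega F(I)\to I$ define $\mathscr{L}_{F,G}(a_1,\dots,a_n):=G(F(a_1)+\cdots+F(a_n))$. A mean $\mathscr{M}$ on $I$ is of type $\mathcal{T}_k^+$ ($k\in\mathbb{N}$) if $\mathscr{M}=\mathscr{L}_{F,G}$ for some continuous $F\colon I\to(\mathbb{R}^k\times\mathbb{Z},+)$ and some continuous $G\colon\omega F(I)\to I$ (with $\mathbb{Z}$ discrete, product topology on $\mathbb{R}^k\times\mathbb{Z}$, subspace topology on $\omega F(I)$). *)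

(* Defs.v *)
From Stdlib Require Import Reals List ZArith.
Open Scope R_scope.

Definition is_interval (I : R -> Prop) : Prop :=
  forall x y z, I x -> I z -> x <= y -> y <= z -> I y.

(* Nonempty finite sequences with entries in I: the domain \bigcup_n I^n. *)
Definition in_dom (I : R -> Prop) (s : list R) : Prop :=
  s <> nil /\ Forall I s.

Definition lmin (s : list R) : R :=
  match s with nil => 0 | x :: t => fold_left Rmin t x end.
Definition lmax (s : list R) : R :=
  match s with nil => 0 | x :: t => fold_left Rmax t x end.

(* A mean on I: M maps \bigcup_n I^n into I with min <= M <= max
   (values of M outside \bigcup_n I^n are irrelevant). *)
Definition is_mean (I : R -> Prop) (M : list R -> R) : Prop :=
  forall s, in_dom I s -> I (M s) /\ lmin s <= M s /\ M s <= lmax s.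

Definition addRZ (p q : R * Z) : R * Z := (fst p + fst q, (snd p + snd q)%Z).

Fixpoint sumF (F : R -> R * Z) (s : list R) : R * Z :=
  match s with
  | nil => (0, 0%Z)
  | x :: nil => F x
  | x :: t => addRZ (F x) (sumF F t)
  end.

Definition omegaF (I : R -> Prop) (F : R -> R * Z) (p : R * Z) : Prop :=
  exists s, in_dom I s /\ sumF F s = p.

(* Continuity of F : I -> R x Z (subspace topology on I, product topology on
   R x Z with Z discrete), written out with basic neighbourhoods ball x {k}. *)
Definition cont_I_RZ (I : R -> Prop) (F : R -> R * Z) : Prop :=
  forall x, I x -> forall eps, 0 < eps -> exists delta, 0 < delta /\
    forall y, I y -> Rabs (y - x) < delta ->
      Rabs (fst (F y) - fst (F x)) < eps /\ snd (F y) = snd (F x).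

(* Continuity of G : S -> R for S a subset of R x Z with the subspace topology
   (Z discrete). *)
Definition cont_RZ_on (S : R * Z -> Prop) (G : R * Z -> R) : Prop :=
  forall p, S p -> forall eps, 0 < eps -> exists delta, 0 < delta /\
    forall q, S q -> snd q = snd p -> Rabs (fst q - fst p) < delta ->
      Rabs (G q - G p) < eps.

Definition is_L (I : R -> Prop) (M : list R -> R) (F : R -> R * Z)
  (G : R * Z -> R) : Prop :=
  forall s, in_dom I s -> M s = G (sumF F s).

Definition type_T1plus (I : R -> Prop) (M : list R -> R) : Prop :=
  exists (F : R -> R * Z) (G : R * Z -> R),
    cont_I_RZ I F /\
    (forall p, omegaF I F p -> I (G p)) /\
    cont_RZ_on (omegaF I F) G /\
    is_L I M F G.

Definition cont_on (I : R -> Prop) (f : R -> R) : Prop :=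
  forall x, I x -> forall eps, 0 < eps -> exists delta, 0 < delta /\
    forall y, I y -> Rabs (y - x) < delta -> Rabs (f y - f x) < eps.

Definition strict_mono_on (I : R -> Prop) (f : R -> R) : Prop :=
  (forall x y, I x -> I y -> x < y -> f x < f y) \/
  (forall x y, I x -> I y -> x < y -> f y < f x).

Definition sumR (f : R -> R) (s : list R) : R :=
  fold_right (fun x acc => f x + acc) 0 s.

(* Quasi-arithmetic mean: M(x) = f^{-1}((f x_1 + ... + f x_n)/n).  Since f is
   injective on I and M(x) is in I, this is stated as f(M x) = average. *)
Definition quasi_arithmetic (I : R -> Prop) (M : list R -> R) : Prop :=
  exists f : R -> R, cont_on I f /\ strict_mono_on I f /\
    forall s, in_dom I s -> f (M s) = sumR f s / INR (length s).

(* Main.v *)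
Require Import Defs.
From Stdlib Require Import Reals List ZArith Lra Lia Psatz Classical ClassicalEpsilon.
Open Scope R_scope.

Lemma clamp_lip a b u t : a <= b ->
  Rabs (Rmax a (Rmin b u) - Rmax a (Rmin b t)) <= Rabs (u - t).
Proof.
  intros. unfold Rmax, Rmin, Rabs.
  repeat destruct (Rle_dec _ _); repeat destruct (Rcase_abs _); lra.
Qed.

Lemma IVT_on (h : R -> R) a b y : a <= b ->
 (forall t, a <= t <= b -> forall eps, 0 < eps -> exists d, 0 < d /\
    forall u, a <= u <= b -> Rabs (u - t) < d -> Rabs (h u - h t) < eps) ->
 (h a <= y <= h b \/ h b <= y <= h a) -> exists t, a <= t <= b /\ h t = y.
Proof.
  intros Hab Hc Hy.
  set (c := fun t => Rmax a (Rmin b t)).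
  assert (Hc1 : forall t, a <= c t <= b).
  { intro t; unfold c, Rmax, Rmin; repeat destruct (Rle_dec _ _); lra. }
  assert (Hc2 : forall t, a <= t <= b -> c t = t).
  { intros t Ht; unfold c, Rmax, Rmin; repeat destruct (Rle_dec _ _); lra. }
  set (g := fun t => h (c t) - y).
  assert (Hg : continuity g).
  { intro t. unfold continuity_pt, continue_in, limit1_in, limit_in.
    simpl. unfold R_dist. intros eps Heps.
    destruct (Hc (c t) (Hc1 t) eps Heps) as [d [Hd Hd']].
    exists d; split; [exact Hd|]. intros u [_ Hu].
    unfold g. replace (h (c u) - y - (h (c t) - y)) with (h (c u) - h (c t)) by ring.
    apply Hd'; [apply Hc1|]. eapply Rle_lt_trans; [apply clamp_lip; exact Hab| exact Hu]. }
  destruct (IVT_cor g a b Hg Hab) as [z [Hz Hgz]].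
  { unfold g. rewrite !Hc2 by lra. destruct Hy; nra. }
  exists z. split; [exact Hz|]. unfold g in Hgz. rewrite Hc2 in Hgz by exact Hz. lra.
Qed.

Lemma in_between I u v w : is_interval I -> I u -> I v ->
  (u <= w <= v \/ v <= w <= u) -> I w.
Proof. intros HI Hu Hv [[]|[]]; [apply (HI u w v)|apply (HI v w u)]; auto. Qed.

Lemma IVT_I I f a b y : is_interval I -> cont_on I f -> I a -> I b -> a <= b ->
  (f a <= y <= f b \/ f b <= y <= f a) -> exists t, a <= t <= b /\ I t /\ f t = y.
Proof.
  intros HI Hf Ha Hb Hab Hy.
  destruct (IVT_on f a b y Hab) as [t [Ht Hft]]; auto.
  - intros t Ht eps Heps.
    destruct (Hf t (in_between I a b t HI Ha Hb (or_introl Ht)) eps Heps) as [d [Hd Hd']].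
    exists d; split; auto. intros u Hu Hut.
    apply Hd'; auto. exact (in_between I a b u HI Ha Hb (or_introl Hu)).
  - exists t; repeat split; try lra. exact (in_between I a b t HI Ha Hb (or_introl Ht)).
Qed.

Lemma cont_affine I f c m t : cont_on I f -> (forall u, 0 <= u <= 1 -> I (c + u * m)) ->
  0 <= t <= 1 -> forall eps, 0 < eps -> exists d, 0 < d /\ forall u, 0 <= u <= 1 ->
  Rabs (u - t) < d -> Rabs (f (c + u * m) - f (c + t * m)) < eps.
Proof.
  intros Hf HI Ht eps Heps.
  destruct (Hf _ (HI t Ht) eps Heps) as [d1 [Hd1 Hd1']].
  assert (Hr := Rabs_pos m).
  exists (d1 / (Rabs m + 1)). split. apply Rdiv_lt_0_compat; lra.
  intros u Hu Hut. apply Hd1'. apply HI; auto.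
  replace (c + u * m - (c + t * m)) with ((u - t) * m) by ring.
  rewrite Rabs_mult.
  assert (E : d1 / (Rabs m + 1) * (Rabs m + 1) = d1) by (field; lra).
  assert (He := Rabs_pos (u - t)).
  nra.
Qed.


Lemma IZR_half z w : IZR z <> IZR w + 1/2.
Proof.
  intro H. destruct (Z_le_gt_dec z w) as [Hl|Hl].
  - apply IZR_le in Hl. lra.
  - assert (Hl' : (w + 1 <= z)%Z) by lia. apply IZR_le in Hl'. rewrite plus_IZR in Hl'. lra.
Qed.

Lemma snd_const I F : is_interval I -> cont_I_RZ I F ->
  forall a b, I a -> I b -> snd (F a) = snd (F b).
Proof.
  intros HI HF.
  set (h := fun x => IZR (snd (F x))).
  assert (Hh : cont_on I h).
  { intros x Hx eps Heps. destruct (HF x Hx eps Heps) as [d [Hd Hd']].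
    exists d; split; auto. intros y Hy Hyx. unfold h. rewrite (proj2 (Hd' y Hy Hyx)).
    rewrite Rminus_diag, Rabs_R0; auto. }
  assert (K : forall a b, I a -> I b -> a <= b -> snd (F a) = snd (F b)).
  { intros a b Ha Hb Hab. destruct (Z.lt_trichotomy (snd (F a)) (snd (F b))) as [Hl|[He|Hl]]; auto.
    - destruct (IVT_I I h a b (IZR (snd (F a)) + 1/2) HI Hh Ha Hb Hab) as [t [_ [_ Ht]]].
      + left. unfold h. apply Zlt_le_succ in Hl. unfold Z.succ in Hl. apply IZR_le in Hl.
        rewrite plus_IZR in Hl. split; lra.
      + exfalso; exact (IZR_half _ _ Ht).
    - destruct (IVT_I I h a b (IZR (snd (F b)) + 1/2) HI Hh Ha Hb Hab) as [t [_ [_ Ht]]].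
      + right. unfold h. apply Zlt_le_succ in Hl. unfold Z.succ in Hl. apply IZR_le in Hl.
        rewrite plus_IZR in Hl. split; lra.
      + exfalso; exact (IZR_half _ _ Ht). }
  intros a b Ha Hb. destruct (Rle_dec a b). auto. symmetry; apply K; auto; lra.
Qed.

Lemma inj_mono_aux I f : is_interval I -> cont_on I f ->
  (forall x y, I x -> I y -> f x = f y -> x = y) ->
  forall a b x y, I a -> I b -> I x -> I y -> a < b -> x < y -> f a < f b -> f x < f y.
Proof.
  intros HI Hf Hinj a b x y Ha Hb Hx Hy Hab Hxy Hfab.
  destruct (Rlt_dec (f x) (f y)) as [|Hn]; auto. exfalso.
  assert (Hp : forall u, 0 <= u <= 1 -> I (a + u * (x - a))).
  { intros u Hu. apply (in_between I a x _ HI Ha Hx).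
    destruct (Rle_dec a x); [left|right]; split; nra. }
  assert (Hq : forall u, 0 <= u <= 1 -> I (b + u * (y - b))).
  { intros u Hu. apply (in_between I b y _ HI Hb Hy).
    destruct (Rle_dec b y); [left|right]; split; nra. }
  set (h := fun u => f (b + u * (y - b)) - f (a + u * (x - a))).
  destruct (IVT_on h 0 1 0) as [t [Ht Hht]].
  - lra.
  - intros t Ht eps Heps.
    destruct (cont_affine I f b (y - b) t Hf Hq Ht (eps/2)) as [d1 [Hd1 Hd1']]; try lra.
    destruct (cont_affine I f a (x - a) t Hf Hp Ht (eps/2)) as [d2 [Hd2 Hd2']]; try lra.
    exists (Rmin d1 d2). split. apply Rmin_glb_lt; auto.
    intros u Hu Hut. unfold h.
    assert (A1 := Hd1' u Hu (Rlt_le_trans _ _ _ Hut (Rmin_l _ _))).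
    assert (A2 := Hd2' u Hu (Rlt_le_trans _ _ _ Hut (Rmin_r _ _))).
    revert A1 A2. unfold Rabs. repeat destruct (Rcase_abs _); lra.
  - right. unfold h. replace (b + 0 * (y - b)) with b by ring.
    replace (a + 0 * (x - a)) with a by ring.
    replace (b + 1 * (y - b)) with y by ring.
    replace (a + 1 * (x - a)) with x by ring. lra.
  - unfold h in Hht.
    assert (E : b + t * (y - b) = a + t * (x - a)).
    { apply Hinj; auto. lra. }
    destruct (Rle_dec t (1/2)); nra.
Qed.

Lemma inj_mono I f : is_interval I -> cont_on I f ->
  (forall x y, I x -> I y -> f x = f y -> x = y) -> strict_mono_on I f.
Proof.
  intros HI Hf Hinj.
  destruct (classic (exists a b, I a /\ I b /\ a < b /\ f a < f b)) as [[a [b [Ha [Hb [Hab Hf']]]]]|Hn].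
  - left. intros x y Hx Hy Hxy. exact (inj_mono_aux I f HI Hf Hinj a b x y Ha Hb Hx Hy Hab Hxy Hf').
  - right. intros x y Hx Hy Hxy.
    destruct (Rtotal_order (f x) (f y)) as [H|[H|H]]; auto.
    + exfalso; apply Hn; eauto 7.
    + apply Hinj in H; auto; lra.
Qed.


Lemma sumF_eq F c s : s <> nil -> Forall (fun x => snd (F x) = c) s ->
  sumF F s = (sumR (fun x => fst (F x)) s, (Z.of_nat (length s) * c)%Z).
Proof.
  induction s as [|x t IH]; intros Hne Hf; [congruence|].
  inversion Hf; subst. destruct t as [|y t'].
  - simpl. destruct (F x) as [p q] eqn:E. simpl in *. f_equal; [ring|]. idtac.
 destruct q; reflexivity.
  - change (sumF F (x :: y :: t')) with (addRZ (F x) (sumF F (y :: t'))).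
    rewrite IH by (congruence || assumption). unfold addRZ. simpl sumR.
    f_equal. change (length (x :: y :: t')) with (S (length (y :: t'))).
    rewrite Nat2Z.inj_succ. cbn [snd]. rewrite Z.mul_succ_l. ring.
Qed.

Lemma fold_min_rep y m : fold_left Rmin (repeat y m) y = y.
Proof. induction m; simpl; auto. rewrite Rmin_left; [auto|lra]. Qed.
Lemma fold_max_rep y m : fold_left Rmax (repeat y m) y = y.
Proof. induction m; simpl; auto. rewrite Rmax_left; [auto|lra]. Qed.

Lemma mean_rep I M y m : is_mean I M -> I y -> M (repeat y (S m)) = y.
Proof.
  intros HM Hy. destruct (HM (repeat y (S m))) as [_ [H1 H2]].
  - split. simpl; congruence. apply Forall_forall. intros z Hz.
    apply repeat_spec in Hz; subst; auto.
  - simpl in H1, H2. rewrite fold_min_rep in H1. rewrite fold_max_rep in H2. simpl. lra.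
Qed.

Lemma sumR_rep f y m : sumR f (repeat y m) = INR m * f y.
Proof. induction m as [|m IH]; simpl sumR; [simpl; ring|]. rewrite IH, S_INR. ring. Qed.

Lemma sum_bounds f s : s <> nil -> exists a b, In a s /\ In b s /\
  f a * INR (length s) <= sumR f s <= f b * INR (length s).
Proof.
  induction s as [|x t IH]; intros Hne; [congruence|].
  destruct t as [|y t'].
  - exists x, x. simpl. split; [auto|split; [auto|]]. lra.
  - destruct IH as [a [b [Ha [Hb [H1 H2]]]]]; [congruence|].
    change (length (x :: y :: t')) with (S (length (y :: t'))). rewrite S_INR.
    change (sumR f (x :: y :: t')) with (f x + sumR f (y :: t')).
    set (n := INR (length (y :: t'))) in *.
    assert (n >= 0) by (unfold n; apply Rle_ge, pos_INR).
    exists (if Rle_dec (f x) (f a) then x else a), (if Rle_dec (f b) (f x) then x else b).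
    split; [destruct Rle_dec; simpl; auto|].
    split; [destruct Rle_dec; simpl; auto|].
    split; destruct Rle_dec; nra.
Qed.


Lemma inv_cont_incr I f : is_interval I -> (forall x y, I x -> I y -> x < y -> f x < f y) ->
  forall u, I u -> forall eps, 0 < eps -> exists d, 0 < d /\
  forall v, I v -> Rabs (f v - f u) < d -> Rabs (v - u) < eps.
Proof.
  intros HI Hf u Hu eps Heps.
  assert (Up : exists d1, 0 < d1 /\ forall v, I v -> f v - f u < d1 -> v < u + eps).
  { destruct (classic (exists w, I w /\ u < w)) as [[w [Hw Huw]]|Hn].
    - set (w' := Rmin w (u + eps/2)).
      assert (Hw'1 : u < w') by (unfold w', Rmin; destruct Rle_dec; lra).
      assert (Hw'2 : w' <= u + eps/2) by apply Rmin_r.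
      assert (Hw'3 : w' <= w) by apply Rmin_l.
      assert (Iw' : I w') by (apply (in_between I u w w' HI Hu Hw); left; lra).
      exists (f w' - f u). split. specialize (Hf u w' Hu Iw' Hw'1). lra.
      intros v Hv Hfv. destruct (Rlt_dec v (u + eps)) as [|Hn]; auto.
      specialize (Hf w' v Iw' Hv ltac:(lra)). lra.
    - exists 1. split; [lra|]. intros v Hv _.
      destruct (Rle_dec v u); [lra|]. exfalso; apply Hn; exists v; split; auto; lra. }
  assert (Lo : exists d2, 0 < d2 /\ forall v, I v -> f u - f v < d2 -> u - eps < v).
  { destruct (classic (exists w, I w /\ w < u)) as [[w [Hw Huw]]|Hn].
    - set (w' := Rmax w (u - eps/2)).
      assert (Hw'1 : w' < u) by (unfold w', Rmax; destruct Rle_dec; lra).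
      assert (Hw'2 : u - eps/2 <= w') by apply Rmax_r.
      assert (Hw'3 : w <= w') by apply Rmax_l.
      assert (Iw' : I w') by (apply (in_between I w u w' HI Hw Hu); left; lra).
      exists (f u - f w'). split. specialize (Hf w' u Iw' Hu Hw'1). lra.
      intros v Hv Hfv. destruct (Rlt_dec (u - eps) v) as [|Hn]; auto.
      specialize (Hf v w' Hv Iw' ltac:(lra)). lra.
    - exists 1. split; [lra|]. intros v Hv _.
      destruct (Rle_dec u v); [lra|]. exfalso; apply Hn; exists v; split; auto; lra. }
  destruct Up as [d1 [Hd1 Hd1']]. destruct Lo as [d2 [Hd2 Hd2']].
  exists (Rmin d1 d2). split. apply Rmin_glb_lt; auto.
  intros v Hv Hfv.
  assert (A := Rmin_l d1 d2). assert (B := Rmin_r d1 d2).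
  revert Hfv. unfold Rabs. repeat destruct (Rcase_abs _); intros.
  all: try (assert (v < u + eps) by (apply Hd1'; auto; lra)).
  all: try (assert (u - eps < v) by (apply Hd2'; auto; lra)).
  all: lra.
Qed.

Lemma inv_cont I f : is_interval I -> strict_mono_on I f ->
  forall u, I u -> forall eps, 0 < eps -> exists d, 0 < d /\
  forall v, I v -> Rabs (f v - f u) < d -> Rabs (v - u) < eps.
Proof.
  intros HI [Hm|Hm].
  - apply inv_cont_incr; auto.
  - intros u Hu eps Heps.
    destruct (inv_cont_incr I (fun x => - f x) HI) with (u := u) (eps := eps) as [d [Hd Hd']]; auto.
    { intros x y Hx Hy Hxy. specialize (Hm x y Hx Hy Hxy). lra. }
    exists d; split; auto. intros v Hv Hfv. apply Hd'; auto.
    replace (- f v - - f u) with (- (f v - f u)) by ring. rewrite Rabs_Ropp; auto.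
Qed.


Lemma dir1 I M : is_interval I -> is_mean I M -> type_T1plus I M -> quasi_arithmetic I M.
Proof.
  intros HI HM [F [G [HF [HGI [HGc HL]]]]].
  set (f := fun x => fst (F x)).
  assert (Hk := snd_const I F HI HF).
  assert (M1 : forall x, I x -> G (F x) = x).
  { intros x Hx. assert (E := mean_rep I M x 0 HM Hx). simpl repeat in E.
    rewrite HL in E. exact E. split; [congruence|constructor; auto]. }
  assert (Hinj : forall x y, I x -> I y -> f x = f y -> x = y).
  { intros x y Hx Hy E. rewrite <- (M1 x Hx), <- (M1 y Hy).
    f_equal. rewrite (surjective_pairing (F x)), (surjective_pairing (F y)).
    unfold f in E. rewrite E, (Hk x y Hx Hy). reflexivity. }
  assert (Hfc : cont_on I f).
  { intros x Hx eps Heps. destruct (HF x Hx eps Heps) as [d [Hd Hd']].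
    exists d; split; auto. intros y Hy Hyx. apply (Hd' y Hy Hyx). }
  exists f; split; [exact Hfc|split; [exact (inj_mono I f HI Hfc Hinj)|]].
  intros s [Hne Hs].
  destruct (sum_bounds f s Hne) as [a [b [Ha [Hb [H1 H2]]]]].
  destruct s as [|x0 t]; [congruence|].
  assert (Hx0 : I x0) by (inversion Hs; auto).
  set (m := length t).
  change (length (x0 :: t)) with (S m) in *.
  assert (Hn : 0 < INR (S m)) by (apply lt_0_INR; lia).
  set (avg := sumR f (x0 :: t) / INR (S m)).
  assert (Ia : I a) by (rewrite Forall_forall in Hs; auto).
  assert (Ib : I b) by (rewrite Forall_forall in Hs; auto).
  assert (Hav1 : f a <= avg).
  { unfold avg. apply (Rmult_le_reg_r (INR (S m))); auto. field_simplify; lra. }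
  assert (Hav2 : avg <= f b).
  { unfold avg. apply (Rmult_le_reg_r (INR (S m))); auto. field_simplify; lra. }
  assert (Hy : exists y, I y /\ f y = avg).
  { destruct (Rle_dec a b).
    - destruct (IVT_I I f a b avg HI Hfc Ia Ib r) as [y [_ [Hy1 Hy2]]]; eauto.
    - destruct (IVT_I I f b a avg HI Hfc Ib Ia) as [y [_ [Hy1 Hy2]]]; eauto. lra. }
  destruct Hy as [y [Iy Hfy]].
  set (c := snd (F y)).
  assert (Hsc : Forall (fun x => snd (F x) = c) (x0 :: t)).
  { eapply Forall_impl; [|exact Hs]. intros z Hz. apply Hk; auto. }
  assert (Hrc : Forall (fun x => snd (F x) = c) (repeat y (S m))).
  { apply Forall_forall. intros z Hz. apply repeat_spec in Hz. subst; reflexivity. }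
  assert (E : M (x0 :: t) = y).
  { rewrite <- (mean_rep I M y m HM Iy).
    rewrite (HL (x0 :: t)) by (split; [congruence|auto]).
    rewrite HL.
    2:{ split; [simpl; congruence|]. apply Forall_forall. intros z Hz.
        apply repeat_spec in Hz; subst; auto. }
    rewrite (sumF_eq F c (x0 :: t) ltac:(congruence) Hsc).
    rewrite (sumF_eq F c (repeat y (S m)) ltac:(simpl; congruence) Hrc).
    rewrite repeat_length. fold f. rewrite sumR_rep, Hfy. unfold avg.
    f_equal. f_equal. field. lra. }
  rewrite E. exact Hfy.
Qed.


Lemma dir2 I M : is_interval I -> is_mean I M -> quasi_arithmetic I M -> type_T1plus I M.
Proof.
  intros HI HM [f [Hfc [Hmono Hq]]].
  assert (Hinj : forall x y, I x -> I y -> f x = f y -> x = y).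
  { intros x y Hx Hy E. destruct (Rtotal_order x y) as [H|[H|H]]; auto;
    destruct Hmono as [Hm|Hm]; [specialize (Hm x y)|specialize (Hm x y)|specialize (Hm y x)|specialize (Hm y x)]; 
    exfalso; rewrite E in Hm; apply (Rlt_irrefl (f y)); auto. }
  set (F := fun x : R => (f x, 1%Z)).
  set (G := fun p : R * Z => epsilon (inhabits 0) (fun x => I x /\ f x = fst p / IZR (snd p))).
  assert (HS : forall s, in_dom I s -> sumF F s = (sumR f s, Z.of_nat (length s))).
  { intros s [Hne Hs]. rewrite (sumF_eq F 1%Z s Hne).
    - rewrite Z.mul_1_r. reflexivity.
    - apply Forall_forall; reflexivity. }
  assert (HG : forall s, in_dom I s -> G (sumF F s) = M s).
  { intros s Hs. rewrite (HS s Hs). unfold G.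
    destruct (epsilon_spec (inhabits 0) (fun x => I x /\ f x = fst (sumR f s, Z.of_nat (length s)) / IZR (snd (sumR f s, Z.of_nat (length s))))) as [H1 H2].
    - exists (M s). split. apply (HM s Hs). simpl. rewrite <- INR_IZR_INZ. apply Hq; auto.
    - apply Hinj; auto. apply (HM s Hs). rewrite H2, (Hq s Hs). simpl. rewrite <- INR_IZR_INZ. reflexivity. }
  exists F, G. split; [|split; [|split]].
  - intros x Hx eps Heps. destruct (Hfc x Hx eps Heps) as [d [Hd Hd']].
    exists d; split; auto. intros y Hy Hyx. split; [apply Hd'; auto| reflexivity].
  - intros p [s [Hs E]]. subst p. rewrite HG; auto. apply (HM s Hs).
  - intros p [s [Hs E]] eps Heps. subst p.
    destruct (inv_cont I f HI Hmono (M s) (proj1 (HM s Hs)) eps Heps) as [d [Hd Hd']].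
    set (n := INR (length s)).
    assert (Hn : 0 < n).
    { unfold n. apply lt_0_INR. destruct Hs as [Hne _]. destruct s; simpl; [congruence|lia]. }
    exists (d * n). split; [nra|].
    intros q [s' [Hs' E']] Hsnd Hfst. subst q.
    rewrite !HG; auto. apply Hd'. apply (HM s' Hs').
    rewrite (HS s Hs), (HS s' Hs') in *. simpl in Hsnd, Hfst.
    apply Nat2Z.inj in Hsnd.
    rewrite (Hq s Hs), (Hq s' Hs'), Hsnd. fold n.
    replace (sumR f s' / n - sumR f s / n) with ((sumR f s' - sumR f s) / n) by (field; lra).
    unfold Rdiv. rewrite Rabs_mult, Rabs_inv, (Rabs_pos_eq n) by lra.
    apply (Rmult_lt_reg_r n); auto. rewrite Rmult_assoc, Rinv_l, Rmult_1_r by lra. lra.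
  - intros s Hs. symmetry. apply HG; auto.
Qed.

Theorem proposition3p2 (I : R -> Prop) (M : list R -> R) :
  is_interval I -> is_mean I M ->
  (type_T1plus I M <-> quasi_arithmetic I M).
Proof.
  intros HI HM. split; [apply dir1|apply dir2]; auto.
Qed.
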